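(* Let $\mathcal G$ be a network with input nodes $\iota_1,\dots,\iota_n$ and output node $o$ such that $o$ is downstream from every input node. Suppose the Jacobian $J$ of the admissible vector field is generic and all its self-couplings $f_{\sigma,x_\sigma}$ are not identically zero. Then $\det\langle H\rangle$ is not identically zero.
   Context: Node $b$ is downstream from $a$ if there is a directed path from $a$ to $b$. An admissible vector field assigns a real variable $x_j$ to each node, with $\dot x_{\iota_m}=f_{\iota_m}(X,\mathcal I)$ for input nodes and $\dot x_j=f_j(X)$ otherwise ($\mathcal I\in\mathbb R$ a single input parameter), smooth, with $f_{\iota_m,\mathcal I}=\partial f_{\iota_m}/\partial\mathcal I\neq0$. Writing $f_{\sigma_i,\sigma_j}=\partial f_{\sigma_i}/\partial x_{\sigma_j}$, the vector field (or its Jacobian $J=(f_{\sigma_i,\sigma_j})$) is generic if (a) $f_{\sigma_i,\sigma_j}\equiv0$ if and only if there is no arrow $\sigma_j\to\sigma_i$, and (b) there is no polynomial relation among the $f_{\sigma_i,\sigma_j}$ (so they may be regarded as algebraically independent variables). The generalized homeostasis matrix $\langle H\rangle$ is obtained from $J$ (nodes ordered with $o$ last) by replacing the last column by the column with $-f_{\iota_m,\mathcal I}$ in row $\iota_m$ and $0$ elsewhere. *)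

(* Defs.v *)
From HB Require Import structures.
From mathcomp Require Import all_boot all_order all_algebra.
From mathcomp Require Import fingraph.
From mathcomp Require Import mpoly.
Set Implicit Arguments. Unset Strict Implicit. Unset Printing Implicit Defensive.
Import GRing.Theory.
Local Open Scope ring_scope.

(* Nodes of the network: 'I_K with K = N.+1; the output node o is the last
   node ord_max ("nodes ordered with o last").
   adj a b  <=>  there is an arrow a -> b.
   The generic Jacobian and the input-sensitivities f_{iota,I} are encoded
   by indeterminates of the polynomial ring {mpoly R[K*K + K]}:
   - 'X_(lshift K (mxvec_index i j)) stands for f_{i,j} = df_i/dx_j,
   - 'X_(rshift (K*K) i)            stands for f_{i,I}  (i an input node). *)

Definition jvar (R : nzRingType) (K : nat) (i j : 'I_K) : {mpoly R[K * K + K]} :=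
  'X_(lshift K (mxvec_index i j)).

Definition ivar (R : nzRingType) (K : nat) (i : 'I_K) : {mpoly R[K * K + K]} :=
  'X_(rshift (K * K) i).

(* Generic Jacobian: entry (i,j) is an independent indeterminate when there
   is an arrow j -> i or when i = j (all self-couplings are nonzero),
   and is identically 0 otherwise. *)
Definition generic_jacobian (R : nzRingType) (N : nat) (adj : rel 'I_N.+1)
  : 'M[{mpoly R[N.+1 * N.+1 + N.+1]}]_N.+1 :=
  \matrix_(i, j) (if (i == j) || adj j i then jvar R i j else 0).

Definition gen_homeostasis_matrix (R : nzRingType) (N : nat) (adj : rel 'I_N.+1)
  (inputs : {set 'I_N.+1}) : 'M[{mpoly R[N.+1 * N.+1 + N.+1]}]_N.+1 :=
  \matrix_(i, j) (if j == ord_max then (if i \in inputs then - ivar R i else 0)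
                  else generic_jacobian R adj i j).

Definition downstream (N : nat) (adj : rel 'I_N.+1) (a b : 'I_N.+1) : bool :=
  connect adj a b.

(* Main.v *)
Require Import Defs.
From HB Require Import structures.
From mathcomp Require Import all_boot all_order all_algebra.
From mathcomp Require Import fingraph fingroup perm.
From mathcomp Require Import mpoly.
Local Open Scope ring_scope.
Import GRing.Theory.

Lemma mxvec_index_inj (m n : nat) (i i' : 'I_m) (j j' : 'I_n) :
  mxvec_index i j = mxvec_index i' j' -> i = i' /\ j = j'.
Proof.
rewrite /mxvec_index => /cast_ord_inj /enum_rank_inj [-> ->]; by [].
Qed.

Lemma prev_head (T : eqType) (x : T) (p : seq T) :
  uniq (x :: p) -> prev (x :: p) x = last x p.
Proof.
move=> /andP[xp _]; rewrite prev_nth mem_head.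
rewrite memNindex // -nth_last /=.
by case: p xp => //= y p _; rewrite nth_last /= -nth_last.
Qed.

Theorem propositionB3 (R : realFieldType) (N : nat) (adj : rel 'I_N.+1)
  (inputs : {set 'I_N.+1}) :
  inputs != set0 ->
  (forall iota, iota \in inputs -> downstream adj iota ord_max) ->
  \det (gen_homeostasis_matrix R adj inputs) != 0.
Proof.
move=> /set0Pn [iota iotaI] hdown.
have := hdown _ iotaI; rewrite /downstream => /connectP [p0 pth0 lst0].
case: (shortenP pth0) lst0 => p pth up _ lst.
set o : 'I_N.+1 := ord_max in lst *.
set c := iota :: p.
pose pf := prev c.
have pf_inj : injective pf by apply: (can_inj (next_prev up)).
have pf_iota : pf iota = o by rewrite /pf /c prev_head.
have pf_o i : (pf i == o) = (i == iota).
  by apply/eqP/eqP => [|->//]; rewrite -pf_iota => /pf_inj.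
pose e' := [rel a b | adj a b || ((a == o) && (b == iota))].
have cyc : path.cycle e' c.
  rewrite /c /= rcons_path; apply/andP; split.
    by apply: sub_path pth => a b /= ->.
  by rewrite -lst /= !eqxx orbT.
have pf_adj i : pf i != o -> (i == pf i) || adj (pf i) i.
  move=> ho; case ic: (i \in c).
    have := prev_cycle cyc ic; rewrite -/pf => /orP [->|/andP[/eqP h _]]; first by rewrite orbT.
    by rewrite h eqxx in ho.
  by rewrite /pf prev_nth ic eqxx.
pose s : 'S_N.+1 := perm pf_inj.
pose v : 'I_(N.+1 * N.+1 + N.+1) -> R := fun k =>
  if [exists i, k == lshift N.+1 (mxvec_index i (pf i))] then 1
  else if k == rshift (N.+1 * N.+1) iota then -1 else 0.
have vj i j : meval v (jvar R i j) = (j == pf i)%:R.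
  rewrite /jvar mevalXU /v.
  case hj: (j == pf i).
    rewrite ifT //; apply/existsP; exists i; by move/eqP: hj => ->.
  rewrite ifF ?eq_lrshift //.
  apply/existsP => -[i' /eqP /lshift_inj /mxvec_index_inj [e1 e2]].
  by move: hj; rewrite e2 e1 eqxx.
have vi i : meval v (ivar R i) = - (i == iota)%:R.
  rewrite /ivar mevalXU /v ifF; last first.
    by apply/existsP => -[i']; rewrite eq_rlshift.
  rewrite eq_rshift; case: (i == iota) => //; by rewrite oppr0.
have Hmap : map_mx (meval v) (gen_homeostasis_matrix R adj inputs) = perm_mx s.
  apply/matrixP => i j; rewrite !mxE /s permE.
  case: ifP => [/eqP -> | hj].
    case: ifP => hi.
      by rewrite mevalN vi opprK -/o pf_o.
    rewrite meval0 -/o pf_o; case: eqP => // ei.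
    by rewrite ei iotaI in hi.
  rewrite /generic_jacobian ?mxE; case: ifP => hc.
    by rewrite vj eq_sym.
  rewrite meval0; case: eqP => // ej.
  have : pf i != o by rewrite ej -/o; apply/negbT; rewrite hj.
  by move/pf_adj; rewrite ej hc.
have := det_map_mx (meval v) (gen_homeostasis_matrix R adj inputs).
rewrite Hmap det_perm => h; apply/negP => /eqP h0.
by move: h; rewrite h0 rmorph0 => /eqP; rewrite signr_eq0.
Qed.
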